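(* For every integer $n\ge1$, $$\sum_{\substack{1\le k\le n\\ \gcd(k,n)\text{ a square}}}k=\frac{n(\beta(n)+\chi(n))}{2},\qquad \prod_{\substack{1\le k\le n\\ \gcd(k,n)\text{ a square}}}k=n^{\beta(n)}\prod_{d\mid n}\left(\frac{d!}{d^d}\right)^{\lambda(n/d)}.$$
   Context: $\chi$ is the characteristic function of the set of perfect squares (with $1$ a square). $\lambda$ is the Liouville function, $\beta(n)=\sum_{d\mid n}d\,\lambda(n/d)$. *)

(* Defs.v *)
From HB Require Import structures.
From mathcomp Require Import all_boot all_order all_algebra.
Set Implicit Arguments. Unset Strict Implicit. Unset Printing Implicit Defensive.
Import Order.TTheory GRing.Theory Num.Theory.

Definition is_square (m : nat) : bool := [exists i : 'I_m.+1, (i * i == m)%N].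
Definition chi (n : nat) : int := if is_square n then 1%R else 0%R.

Definition bigOmega (n : nat) : nat := \sum_(p <- primes n) logn p n.

Definition liouville (n : nat) : int := ((-1) ^+ bigOmega n)%R.

Definition beta (n : nat) : int :=
  (\sum_(d <- divisors n) (d%:Z * liouville (n %/ d)))%R.

(* Main.v *)
Require Import Defs.
From HB Require Import structures.
From mathcomp Require Import all_boot all_order all_algebra.
From mathcomp Require Import zify ring.
Import Order.TTheory GRing.Theory Num.Theory.

Lemma is_squareP m : reflect (exists i, i * i = m) (is_square m).
Proof.
apply: (iffP existsP) => [[i /eqP h]|[i h]]; first by exists i.
have him : i < m.+1.
  case: i h => [|i] h; first by rewrite -h.
  by rewrite ltnS -h leq_pmulr.
by exists (Ordinal him); rewrite /= h.
Qed.

Lemma sq_pp p k : prime p -> is_square (p * p * k) = is_square k.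
Proof.
move=> pp; have p0 := prime_gt0 pp.
apply/is_squareP/is_squareP => [[i hi]|[j hj]]; last first.
  by exists (p * j); rewrite -hj; ring.
have : p %| i.
  have : p %| i * i by rewrite hi -mulnA dvdn_mulr.
  by rewrite Euclid_dvdM // orbb.
case/dvdnP => j hj; exists j; apply/eqP.
have pp0 : 0 < p * p by rewrite muln_gt0 p0.
rewrite -(eqn_pmul2l pp0) -hi hj; apply/eqP; ring.
Qed.

Lemma nsq_p p k : prime p -> ~~ (p %| k) -> ~~ is_square (p * k).
Proof.
move=> pp npk; have p0 := prime_gt0 pp; apply/is_squareP => -[i hi].
have : p %| i.
  have : p %| i * i by rewrite hi dvdn_mulr.
  by rewrite Euclid_dvdM // orbb.
case/dvdnP => j hj; move: hi; rewrite hj => hi.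
have : k = j * j * p.
  apply/eqP; rewrite -(eqn_pmul2l p0) -hi; apply/eqP; ring.
by move=> hk; move: npk; rewrite hk dvdn_mull.
Qed.

Lemma bigOmegaE n N : 0 < n -> n < N -> bigOmega n = \sum_(0 <= q < N) logn q n.
Proof.
move=> n0 nN.
rewrite (bigID (fun q => q \in primes n)) /= [X in _ + X]big1 ?addn0; last first.
  by move=> q /negbTE h; apply/eqP; rewrite eqn0Ngt logn_gt0 h.
rewrite -big_filter /bigOmega; apply: perm_big; apply: uniq_perm.
- exact: primes_uniq.
- by rewrite filter_uniq // iota_uniq.
move=> q; rewrite mem_filter mem_index_iota /=.
case h: (q \in primes n) => //=.
move: h; rewrite mem_primes => /and3P[_ _ qn].
by rewrite (leq_ltn_trans (dvdn_leq n0 qn) nN).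
Qed.

Lemma bigOmegaM m k : 0 < m -> 0 < k -> bigOmega (m * k) = bigOmega m + bigOmega k.
Proof.
move=> m0 k0; have mk0 : 0 < m * k by rewrite muln_gt0 m0.
rewrite !(@bigOmegaE _ (m * k).+1) //; last 2 first.
- by rewrite ltnS ?leq_pmulr ?leq_pmull.
- by rewrite ltnS ?leq_pmulr ?leq_pmull.
rewrite -big_split /=; apply: eq_bigr => q _; exact: lognM.
Qed.

Lemma bigOmega_prime p : prime p -> bigOmega p = 1.
Proof. by move=> pp; rewrite /bigOmega primes_prime // big_seq1 logn_prime // eqxx. Qed.

Lemma liouville_pM p c : prime p -> 0 < c -> liouville (p * c) = (- liouville c)%R.
Proof.
move=> pp c0; rewrite /liouville bigOmegaM ?(prime_gt0 pp) // bigOmega_prime //.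
by rewrite add1n GRing.exprS GRing.mulN1r.
Qed.

Lemma liouville1 : liouville 1 = 1%R.
Proof. by rewrite /liouville /bigOmega big_nil. Qed.

Lemma divn_div_id n d : 0 < n -> d %| n -> n %/ (n %/ d) = d.
Proof. by move=> n0 dn; rewrite divnA // mulKn. Qed.

Section Div.
Variables (R : Type) (idx : R) (op : Monoid.com_law idx).

Lemma big_div_filter_p p m (F : nat -> R) : prime p -> 0 < m -> p %| m ->
  \big[op/idx]_(c <- divisors m | p %| c) F c =
  \big[op/idx]_(c <- divisors (m %/ p)) F (p * c).
Proof.
move=> pp m0 pm; have p0 := prime_gt0 pp.
have mp0 : 0 < m %/ p by rewrite divn_gt0 // dvdn_leq.
rewrite -big_filter -(big_map (fun c => p * c) xpredT); apply: perm_big.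
apply: uniq_perm.
- by rewrite filter_uniq // divisors_uniq.
- rewrite map_inj_uniq ?divisors_uniq // => x y /eqP; by rewrite eqn_pmul2l // => /eqP.
move=> x; rewrite mem_filter -dvdn_divisors //.
apply/andP/mapP => [[/dvdnP[j ->] hj]|[y hy ->]].
  exists j; last by rewrite mulnC.
  rewrite -dvdn_divisors // dvdn_divRL //; by rewrite mulnC.
move: hy; rewrite -dvdn_divisors // dvdn_divRL // => hy.
by rewrite dvdn_mulr // mulnC.
Qed.

Lemma big_div_filter_np p m (F : nat -> R) : 0 < m -> ~~ (p %| m) ->
  \big[op/idx]_(c <- divisors m | p %| c) F c = idx.
Proof.
move=> m0 npm; rewrite big_seq_cond big1 // => c /andP[].
rewrite -dvdn_divisors // => cm pc; by rewrite (dvdn_trans pc cm) in npm.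
Qed.

Lemma big_div_filter_coprime p m (F : nat -> R) : prime p -> 0 < m ->
  \big[op/idx]_(c <- divisors (p * m) | ~~ (p %| c)) F c =
  \big[op/idx]_(c <- divisors m | ~~ (p %| c)) F c.
Proof.
move=> pp m0; have pm0 : 0 < p * m by rewrite muln_gt0 (prime_gt0 pp) m0.
rewrite -[LHS]big_filter -[RHS]big_filter; apply: perm_big; apply: uniq_perm; rewrite ?filter_uniq ?divisors_uniq //.
move=> x; rewrite !mem_filter -!dvdn_divisors //.
case h: (p %| x) => //=.
rewrite Gauss_dvdr // coprime_sym prime_coprime // h //.
Qed.

Lemma big_div_flip n (F : nat -> R) : 0 < n ->
  \big[op/idx]_(d <- divisors n) F d = \big[op/idx]_(c <- divisors n) F (n %/ c).
Proof.
move=> n0; rewrite -(big_map (fun c => n %/ c) xpredT); apply: perm_big.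
apply: uniq_perm.
- exact: divisors_uniq.
- rewrite map_inj_in_uniq ?divisors_uniq // => x y.
  rewrite -!dvdn_divisors // => hx hy hxy.
  by rewrite -(@divn_div_id n x n0 hx) hxy divn_div_id.
move=> x; apply/idP/mapP => [hx|[y hy ->]].
  exists (n %/ x); last by rewrite -dvdn_divisors // in hx; rewrite divn_div_id.
  by rewrite -dvdn_divisors // dvdn_div // dvdn_divisors.
by rewrite -dvdn_divisors // dvdn_div // dvdn_divisors.
Qed.

Lemma big_div_gcd n k (F : nat -> R) : 0 < n ->
  \big[op/idx]_(c <- divisors (gcdn k n)) F c = \big[op/idx]_(c <- divisors n | c %| k) F c.
Proof.
move=> n0; have g0 : 0 < gcdn k n by rewrite gcdn_gt0 n0 orbT.
rewrite -[RHS]big_filter; apply: perm_big; apply: uniq_perm; rewrite ?filter_uniq ?divisors_uniq //.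
move=> x; by rewrite mem_filter -!dvdn_divisors // dvdn_gcd andbC.
Qed.

End Div.

Lemma G_chi m : 0 < m -> (\sum_(c <- divisors m) liouville c)%R = chi m.
Proof.
elim: m {-2}m (leqnn m) => [|N IH] m hm m0; first by case: m hm m0.
case: (ltnP 1 m) => m1; last first.
  have -> : m = 1 by apply/anti_leq/andP.
  have -> : divisors 1 = [:: 1] by [].
  rewrite big_seq1 liouville1 /chi.
  have -> : is_square 1 by apply/is_squareP; exists 1.
  by [].
set p := pdiv m; have pp : prime p := pdiv_prime m1; have pm : p %| m := pdiv_dvd m.
have p1 := prime_gt1 pp; have p0 := prime_gt0 pp.
set m' := m %/ p; have em : m = p * m' by rewrite /m' mulnC divnK.
have m'0 : 0 < m' by rewrite /m' divn_gt0 // dvdn_leq.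
have m'lt : m' < m by exact: ltn_Pdiv.
rewrite (bigID (fun c => p %| c)) /= big_div_filter_p // -/m'.
rewrite [in X in (_ + X)%R]em big_div_filter_coprime //.
rewrite (eq_big_seq (fun c => - liouville c)%R); last first.
  move=> c; rewrite -dvdn_divisors // => hc; apply: liouville_pM => //.
  exact: dvdn_gt0 hc.
rewrite sumrN.
have -> : (\sum_(c <- divisors m') liouville c =
   \sum_(c <- divisors m' | (p %| c)%N) liouville c + \sum_(c <- divisors m' | ~~ (p %| c)%N) liouville c)%R.
  by rewrite (bigID (fun c => p %| c)).
rewrite opprD addrNK.
case: (boolP (p %| m')) => hpm'; last first.
  rewrite big_div_filter_np // oppr0 /chi em.
  by rewrite (negbTE (@nsq_p p m' pp hpm')).
rewrite big_div_filter_p //.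
have m''0 : 0 < m' %/ p by rewrite divn_gt0 // dvdn_leq.
rewrite (eq_big_seq (fun c => - liouville c)%R); last first.
  move=> c; rewrite -dvdn_divisors // => hc; apply: liouville_pM => //.
  exact: dvdn_gt0 hc.
rewrite sumrN opprK IH //; last first.
  by rewrite (leq_trans (leq_div _ _)) // -ltnS (leq_trans m'lt hm).
have -> : m = p * p * (m' %/ p) by rewrite em -mulnA [p * (m' %/ p)]mulnC divnK.
by rewrite /chi sq_pp.
Qed.

Lemma big_mul_reindex (R : Type) (idx : R) (op : Monoid.law idx) c n M (F : nat -> R) :
  0 < c -> n = c * M ->
  \big[op/idx]_(1 <= k < n.+1 | c %| k) F k = \big[op/idx]_(1 <= j < M.+1) F (c * j).
Proof.
move=> c0 ->; elim: M => [|M IH]; first by rewrite muln0 !big_geq.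
rewrite big_nat_recr //= -IH.
rewrite (@big_cat_nat _ _ _ (c * M).+1) //=; last by rewrite ltnS leq_pmul2l.
congr (op _ _).
rewrite big_mkcond big_nat_recr /=; last by rewrite ltn_pmul2l.
rewrite dvdn_mulr // big_nat_cond big1 ?Monoid.mul1m // => k /andP[/andP[lo hi] _].
case: ifP => // /dvdnP[j hj]; move: lo hi; rewrite hj [j * c]mulnC !ltn_pmul2l // => lo hi; exfalso; lia.
Qed.

Local Open Scope ring_scope.

Lemma prod_exprz (x : rat) (I : Type) (r : seq I) (P : pred I) (f : I -> int) : x != 0 ->
  \prod_(i <- r | P i) x ^ (f i) = x ^ (\sum_(i <- r | P i) f i).
Proof.
move=> x0; elim: r => [|a r IH]; first by rewrite !big_nil expr0z.
rewrite !big_cons; case: (P a); by rewrite ?IH ?expfzDr.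
Qed.

Lemma exprz_prod (I : Type) (r : seq I) (P : pred I) (F : I -> rat) (z : int) :
  (\prod_(i <- r | P i) F i) ^ z = \prod_(i <- r | P i) (F i) ^ z.
Proof.
elim: r => [|a r IH]; first by rewrite !big_nil exp1rz.
rewrite !big_cons; case: (P a); by rewrite ?expfzMl ?IH.
Qed.

Lemma sum_nat_rat M : \sum_(1 <= j < M.+1) (j%:R : rat) = M%:R * (M%:R + 1) / 2%:R.
Proof.
elim: M => [|M IH]; first by rewrite big_geq // mul0r mul0r.
rewrite big_nat_recr //= IH -[M.+1]addn1 !natrD.
by field.
Qed.

Lemma prod_mul_rat c M : \prod_(1 <= j < M.+1) ((c * j)%N%:R : rat) = c%:R ^+ M * (M`!)%:R.
Proof.
under eq_bigr do rewrite natrM.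
rewrite big_split /= prodr_const_nat subn1 /= fact_prod natr_prod //.
Qed.

Lemma beta_flip n : (0 < n)%N -> beta n = \sum_(c <- divisors n) (n %/ c)%:Z * liouville c.
Proof.
move=> n0; rewrite /beta (@big_div_flip _ _ _ n _ n0); apply: eq_big_seq => c.
by rewrite -dvdn_divisors // => hc; rewrite divn_div_id.
Qed.

Lemma ind_sq n k : (0 < n)%N -> (0 < k)%N ->
  \sum_(c <- divisors n | (c %| k)%N) liouville c = chi (gcdn k n).
Proof.
move=> n0 k0; rewrite -big_div_gcd // G_chi // gcdn_gt0 n0 orbT //.
Qed.

Theorem mainTheorem11 (n : nat) (hn : (1 <= n)%N) :
  (\sum_(1 <= k < n.+1 | is_square (gcdn k n)) (k%:R : rat)
     = (n%:R * ((beta n)%:~R + (chi n)%:~R)) / 2%:R)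
  /\
  (\prod_(1 <= k < n.+1 | is_square (gcdn k n)) (k%:R : rat)
     = (n%:R : rat) ^ (beta n)
       * \prod_(d <- divisors n)
           ((d`!)%:R / (d ^ d)%N%:R) ^ (liouville (n %/ d))).
Proof.
have n0 : (0 < n)%N := hn.
split.
- rewrite big_mkcond /=.
  transitivity (\sum_(1 <= k < n.+1) \sum_(c <- divisors n)
     (if (c %| k)%N then ((liouville c)%:~R : rat) * k%:R else 0)).
    apply: eq_big_nat => k /andP[k1 _].
    rewrite -big_mkcond /= -mulr_suml -rmorph_sum /= ind_sq // /chi.
    by case: ifP => _; rewrite ?mul1r ?mul0r.
  rewrite exchange_big /=.
  transitivity (\sum_(c <- divisors n) ((liouville c)%:~R : rat) * (n%:R * ((n %/ c)%:R + 1) / 2)).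
    apply: eq_big_seq => c; rewrite -dvdn_divisors // => hc.
    have c0 : (0 < c)%N := dvdn_gt0 n0 hc.
    set M := (n %/ c)%N.
    have hn' : n = (c * M)%N by rewrite mulnC divnK.
    rewrite -big_mkcond /= -mulr_sumr (@big_mul_reindex _ _ _ c n M _ c0 hn') /=.
    under eq_bigr do rewrite natrM.
    rewrite -mulr_sumr sum_nat_rat.
    have -> : (n%:R : rat) = c%:R * M%:R by rewrite hn' natrM.
    by field.
  rewrite -(@G_chi n n0) beta_flip // !rmorph_sum /= -big_split /= mulr_sumr mulr_suml.
  apply: eq_bigr => c _; rewrite rmorphM /=.
  by rewrite pmulrn; ring.
- rewrite big_mkcond /=.
  transitivity (\prod_(1 <= k < n.+1) \prod_(c <- divisors n)
     (if (c %| k)%N then (k%:R : rat) ^ liouville c else 1)).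
    apply: eq_big_nat => k /andP[k1 _].
    have k0 : (k%:R : rat) != 0 by rewrite pnatr_eq0 -lt0n.
    rewrite -big_mkcond /= prod_exprz // ind_sq // /chi.
    by case: ifP => _; rewrite ?expr1z ?expr0z.
  rewrite exchange_big /=.
  transitivity (\prod_(c <- divisors n) ((c%:R ^+ (n %/ c) * ((n %/ c)`!)%:R : rat) ^ liouville c)).
    apply: eq_big_seq => c; rewrite -dvdn_divisors // => hc.
    have c0 : (0 < c)%N := dvdn_gt0 n0 hc.
    set M := (n %/ c)%N.
    have hn' : n = (c * M)%N by rewrite mulnC divnK.
    by rewrite -big_mkcond /= (@big_mul_reindex _ _ _ c n M _ c0 hn') -exprz_prod prod_mul_rat.
  rewrite beta_flip // -prod_exprz; last by rewrite pnatr_eq0 -lt0n.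
  rewrite [X in _ = _ * X](@big_div_flip _ _ _ n _ n0) -big_split /=.
  apply: eq_big_seq => c; rewrite -dvdn_divisors // => hc.
  have c0 : (0 < c)%N := dvdn_gt0 n0 hc.
  rewrite divn_div_id // -exprz_exp -expfzMl; congr (_ ^ _).
  set M := (n %/ c)%N.
  have hn' : n = (c * M)%N by rewrite mulnC divnK.
  have M0 : (0 < M)%N by rewrite divn_gt0 // dvdn_leq.
  have M0' : (M%:R : rat) != 0 by rewrite pnatr_eq0 -lt0n.
  rewrite -exprnP natrX hn' natrM exprMn.
  field; by rewrite expf_neq0.
Qed.
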